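(* Let $E$ be a countable directed graph, $x=x_0x_1\cdots\in E^\infty$, and $\beta\in(-\infty,0)$. If the orbit $[x]$ is $\beta$-summable, then $E^*s(x_i)$ is finite for every $i\ge0$, $s(x_i)\neq s(x_j)$ whenever $i\neq j$, and there exists $\mu\in E^*$ such that $s(\mu)$ is a source and $r(\mu)=s(x)$.
   Context: Directed graph conventions: paths $\mu=\mu_0\cdots\mu_{n-1}$ with $r(\mu_i)=s(\mu_{i+1})$, vertices as paths of length $0$, $E^*$ the finite paths, $E^*v=\{\mu\in E^*:r(\mu)=v\}$; $E^\infty$ the infinite paths $x=x_0x_1\cdots$ with $r(x_i)=s(x_{i+1})$, $s(x)=s(x_0)$. A vertex is a source if it receives no edges. The orbit (tail equivalence class) of $x\in E^\infty$ is $[x]=\{y\in E^\infty:\exists n,m\ge0,\ y_{i+m}=x_{i+n}\ \forall i\ge0\}$. $[x]$ is consistent if $x$ is not eventually periodic; then for $y\in[x]$ written $y=\mu z$, $x=\nu z$ with $\mu,\nu$ finite paths and $z\in E^\infty$, $l_x(y):=e^{-(|\mu|-|\nu|)}$ is well defined. $[x]$ is $\beta$-summable if it is consistent and $\sum_{y\in[x]}l_x(y)^\beta<\infty$. *)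

(* Defs.v *)
From Stdlib Require Import Reals List.
Import ListNotations.
Open Scope R_scope.

Record graph := Graph {
  Vert : Type;
  Edge : Type;
  src : Edge -> Vert;
  rng : Edge -> Vert
}.

Definition countable (T : Type) : Prop :=
  exists f : T -> nat, forall a b, f a = f b -> a = b.

Definition countable_graph (E : graph) : Prop :=
  countable (Vert E) /\ countable (Edge E).

(* Finite paths: a pair (v, l); if l = [] it is the vertex v (length 0),
   otherwise l = mu_0 ... mu_{n-1} with s(mu_0) = v and r(mu_i) = s(mu_{i+1}). *)
Fixpoint chain (E : graph) (l : list (Edge E)) : Prop :=
  match l with
  | [] => True
  | e :: l' =>
      match l' with
      | [] => True
      | f :: _ => rng E e = src E f /\ chain E l'
      end
  end.

Definition fpath (E : graph) := (Vert E * list (Edge E))%type.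

Definition valid_fpath (E : graph) (p : fpath E) : Prop :=
  match snd p with
  | [] => True
  | e :: _ => src E e = fst p /\ chain E (snd p)
  end.

Definition fsrc (E : graph) (p : fpath E) : Vert E := fst p.

Definition frng (E : graph) (p : fpath E) : Vert E :=
  match snd p with
  | [] => fst p
  | e :: l => rng E (last l e)
  end.

Definition finite_paths_into (E : graph) (v : Vert E) : Prop :=
  exists L : list (fpath E),
    forall p, valid_fpath E p -> frng E p = v -> In p L.

Definition is_source (E : graph) (v : Vert E) : Prop :=
  forall e : Edge E, rng E e <> v.

Definition ipath (E : graph) (x : nat -> Edge E) : Prop :=
  forall i, rng E (x i) = src E (x (S i)).

(* y = mu z, x = nu z with |mu| = m, |nu| = n. *)
Definition tail_equiv_by (E : graph) (x y : nat -> Edge E) (n m : nat) : Prop :=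
  forall i, y (i + m)%nat = x (i + n)%nat.

Definition in_orbit (E : graph) (x y : nat -> Edge E) : Prop :=
  ipath E y /\ exists n m, tail_equiv_by E x y n m.

Definition eventually_periodic (E : graph) (x : nat -> Edge E) : Prop :=
  exists N p, (0 < p)%nat /\ forall i, (N <= i)%nat -> x (i + p)%nat = x i.

Definition consistent (E : graph) (x : nat -> Edge E) : Prop :=
  ~ eventually_periodic E x.

(* r is the value l_x(y) = e^{-(|mu| - |nu|)} (well defined when [x] is consistent). *)
Definition lx_is (E : graph) (x y : nat -> Edge E) (r : R) : Prop :=
  ipath E y /\ exists n m, tail_equiv_by E x y n m /\ r = exp (INR n - INR m).

Fixpoint sum_pow (E : graph) (beta : R) (l : list ((nat -> Edge E) * R)) : R :=
  match l with
  | [] => 0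
  | yr :: l' => Rpower (snd yr) beta + sum_pow E beta l'
  end.

(* [x] is beta-summable: consistent and sum_{y in [x]} l_x(y)^beta < oo,
   i.e. the finite partial sums over distinct elements of [x] are bounded. *)
Definition beta_summable (E : graph) (x : nat -> Edge E) (beta : R) : Prop :=
  consistent E x /\
  exists B : R, forall l : list ((nat -> Edge E) * R),
    NoDup (map fst l) ->
    (forall yr, In yr l -> lx_is E x (fst yr) (snd yr)) ->
    sum_pow E beta l <= B.

(* Main.v *)
Require Import Defs.
From Stdlib Require Import Reals List Lia Lra Classical.
Import ListNotations.
Open Scope R_scope.

Lemma last_cons' {A} (l : list A) h d : last (h::l) d = last l h.
Proof. revert h d; induction l as [|a l IH]; intros h d; simpl; auto.
  destruct l; simpl in *; auto. Qed.

Lemma nth_last' {A} (l : list A) d : l <> [] -> nth (length l - 1) l d = last l d.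
Proof. induction l as [|a l IH]; intros H; [congruence|].
  destruct l as [|b l]; simpl; auto.
  simpl in IH |- *. rewrite <- IH by congruence. rewrite Nat.sub_0_r. destruct (length l) eqn:?; simpl; auto. Qed.

Lemma chain_nth (E : graph) l d : chain E l -> forall k, (S k < length l)%nat ->
  rng E (nth k l d) = src E (nth (S k) l d).
Proof. induction l as [|a l IH]; intros Hc k Hk; simpl in *; [lia|].
  destruct l as [|b l]; simpl in *; [lia|]. destruct Hc as [H1 H2].
  destruct k; [exact H1|]. apply (IH H2 k). simpl; lia. Qed.

Section S.
Variable (E : graph) (x : nat -> Edge E) (i : nat).

Definition ext (p : fpath E) : nat -> Edge E := fun k =>
  if Nat.ltb k (length (snd p)) then nth k (snd p) (x 0%nat) else x (k - length (snd p) + i)%nat.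

Lemma ext_ipath p : ipath E x -> valid_fpath E p -> frng E p = src E (x i) -> ipath E (ext p).
Proof.
  intros Hx Hv Hr k. unfold ext. destruct p as [w l]. simpl in *.
  destruct (Nat.ltb_spec k (length l)); destruct (Nat.ltb_spec (S k) (length l)).
  - destruct l as [|e l']; [simpl in *; lia|]. destruct Hv as [_ Hc]. apply chain_nth; auto.
  - destruct l as [|e l']; [simpl in *; lia|]. unfold frng in Hr; simpl in Hr.
    assert (k = length (e::l') - 1)%nat by lia. subst k.
    rewrite nth_last' by congruence. rewrite last_cons'. rewrite Hr.
    f_equal. f_equal. simpl. lia.
  - lia.
  - destruct (length l) as [|n]; match goal with |- rng _ (x ?a) = src _ (x ?b) => replace b with (S a) by lia end; apply Hx.
Qed.

Lemma ext_tail p : tail_equiv_by E x (ext p) i (length (snd p)).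
Proof. intro k. unfold ext. destruct (Nat.ltb_spec (k + length (snd p)) (length (snd p))); [lia|].
  f_equal; lia. Qed.

Lemma ext_inj p q : ipath E x -> consistent E x ->
  valid_fpath E p -> frng E p = src E (x i) ->
  valid_fpath E q -> frng E q = src E (x i) -> ext p = ext q -> p = q.
Proof.
  intros Hx Hcons Hvp Hrp Hvq Hrq He.
  assert (Hk : forall k, ext p k = ext q k) by (intro; rewrite He; auto).
  destruct p as [w l], q as [w' l']. unfold ext in Hk; simpl in *.
  assert (Hlen : length l = length l').
  { destruct (Nat.lt_total (length l) (length l')) as [Hlt|[Heq|Hlt]]; auto; exfalso; apply Hcons.
    - exists i, (length l' - length l)%nat. split; [lia|]. intros j Hj.
      specialize (Hk (j - i + length l')%nat).
      destruct (Nat.ltb_spec (j - i + length l') (length l)); [lia|].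
      destruct (Nat.ltb_spec (j - i + length l') (length l')); [lia|].
      replace (j - i + length l' - length l + i)%nat with (j + (length l' - length l))%nat in Hk by lia.
      rewrite Hk. f_equal; lia.
    - exists i, (length l - length l')%nat. split; [lia|]. intros j Hj.
      specialize (Hk (j - i + length l)%nat).
      destruct (Nat.ltb_spec (j - i + length l) (length l)); [lia|].
      destruct (Nat.ltb_spec (j - i + length l) (length l')); [lia|].
      replace (j - i + length l - length l' + i)%nat with (j + (length l - length l'))%nat in Hk by lia.
      rewrite <- Hk. f_equal; lia. }
  assert (l = l').
  { apply nth_ext with (x 0%nat) (x 0%nat); auto. intros n Hn. specialize (Hk n).
    destruct (Nat.ltb_spec n (length l)); [|lia].
    destruct (Nat.ltb_spec n (length l')); [|lia]. auto. }
  subst l'. f_equal. destruct l as [|e l].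
  - unfold frng in *; simpl in *. congruence.
  - unfold valid_fpath in *; simpl in *. destruct Hvp, Hvq; congruence.
Qed.
End S.

Lemma bound_list {A} (g : A -> nat) (L : list A) : exists M, forall a, In a L -> (g a <= M)%nat.
Proof. induction L as [|a L [M HM]]. - exists 0%nat; intros ? []. 
  - exists (Nat.max (g a) M). intros b [<-|Hb]; [lia|]. specialize (HM b Hb); lia. Qed.

Lemma sum_pow_lb (E : graph) beta (c : R) (L : list (fpath E)) (F : fpath E -> (nat -> Edge E) * R) :
  (forall p, c <= Rpower (snd (F p)) beta) -> INR (length L) * c <= sum_pow E beta (map F L).
Proof. intro H. induction L as [|a L IH]; cbn [map sum_pow length]. - simpl; lra.
  - rewrite S_INR. specialize (H a). lra. Qed.

Lemma finite_i (E : graph) (x : nat -> Edge E) beta i : ipath E x -> beta < 0 ->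
  beta_summable E x beta -> finite_paths_into E (src E (x i)).
Proof.
  intros Hx Hb [Hcons [B HB]].
  set (v := src E (x i)).
  destruct (classic (finite_paths_into E v)) as [|Hn]; auto. exfalso.
  assert (Hnew : forall L, exists p, valid_fpath E p /\ frng E p = v /\ ~ In p L).
  { intro L. apply NNPP; intro Hc. apply Hn. exists L. intros p Hv Hr.
    apply NNPP; intro. apply Hc; eauto. }
  assert (Hbuild : forall k, exists L, NoDup L /\ length L = k /\
     forall p, In p L -> valid_fpath E p /\ frng E p = v).
  { induction k as [|k [L0 [HL1 [HL2 HL3]]]].
    - exists []; split; [constructor|]. split; [reflexivity|]. intros ? [].
    - destruct (Hnew L0) as [p0 [Hp1 [Hp2 Hp3]]]. exists (p0 :: L0). split; [constructor; auto|]. split; [simpl; lia|].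
      intros q [<-|Hq]; auto. }
  set (c := exp (beta * INR i)).
  assert (Hc : c > 0) by apply exp_pos.
  destruct (INR_archimed c B Hc) as [n Hnn].
  destruct (Hbuild n) as [L [HL1 [HL2 HL3]]].
  set (F := fun p : fpath E => (ext E x i p, exp (INR i - INR (length (snd p))))).
  assert (Hsum : sum_pow E beta (map F L) <= B).
  { apply HB.
    - rewrite map_map. apply NoDup_map_NoDup_ForallPairs; auto.
      intros a b Ha Hb' Heq. destruct (HL3 a Ha), (HL3 b Hb').
      apply (ext_inj E x i); auto.
    - intros yr Hyr. apply in_map_iff in Hyr. destruct Hyr as [p [<- Hp]].
      destruct (HL3 p Hp). split.
      + apply ext_ipath; auto.
      + exists i, (length (snd p)). split; [apply ext_tail| reflexivity]. }
  assert (Hlb : INR (length L) * c <= sum_pow E beta (map F L)).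
  { apply sum_pow_lb. intro p. unfold F, Rpower, c; simpl. rewrite ln_exp.
    assert (0 <= INR (length (snd p))) by apply pos_INR.
    assert (H1 : beta * INR i <= beta * (INR i - INR (length (snd p)))) by nra.
    destruct (Rle_lt_or_eq_dec _ _ H1) as [Hl|He].
    - left. apply exp_increasing. lra.
    - rewrite He. lra. }
  rewrite HL2 in Hlb. lra.
Qed.

Lemma chain_map_seq (E : graph) (f : nat -> Edge E) :
  (forall k, rng E (f k) = src E (f (S k))) -> forall m a, chain E (map f (seq a m)).
Proof. intros Hf m. induction m as [|m IH]; intro a; simpl; auto.
  destruct m; simpl; auto. split; auto. specialize (IH (S a)). simpl in IH. auto. Qed.

Lemma last_map_seq {A} (f : nat -> A) m : forall a d, last (map f (seq a (S m))) d = f (a + m)%nat.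
Proof. induction m as [|m IH]; intros a d.
  - simpl. f_equal; lia.
  - change (seq a (S (S m))) with (a :: seq (S a) (S m)).
    change (map f (a :: seq (S a) (S m))) with (f a :: map f (seq (S a) (S m))).
    rewrite last_cons'. rewrite IH. f_equal; lia. Qed.

Lemma cyc_path (E : graph) (f : nat -> Edge E) m :
  (forall k, rng E (f k) = src E (f (S k))) ->
  valid_fpath E (src E (f 0%nat), map f (seq 0 (S m))) /\
  frng E (src E (f 0%nat), map f (seq 0 (S m))) = src E (f (S m)).
Proof. intro Hf. split.
  - unfold valid_fpath; simpl. split; auto. apply (chain_map_seq E f Hf (S m) 0).
  - unfold frng. simpl. rewrite <- (last_cons' _ (f 0%nat) (f 0%nat)).
    change (f 0%nat :: map f (seq 1 m)) with (map f (seq 0 (S m))).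
    rewrite (last_map_seq f m 0 (f 0%nat)). apply Hf. Qed.

Lemma distinct_lt (E : graph) (x : nat -> Edge E) i j : ipath E x ->
  finite_paths_into E (src E (x i)) -> (i < j)%nat -> src E (x i) <> src E (x j).
Proof.
  intros Hx [L HL] Hij Heq.
  set (d := (j - i)%nat).
  assert (Hd : d <> 0%nat) by (unfold d; lia).
  set (f := fun k => x (i + k mod d)%nat).
  assert (Hf : forall k, rng E (f k) = src E (f (S k))).
  { intro k. unfold f. pose proof (Nat.mod_bound_pos k d ltac:(lia) ltac:(lia)).
    pose proof (Nat.div_mod_eq k d).
    rewrite (Hx (i + k mod d)%nat).
    destruct (Nat.eq_dec (S (k mod d)) d) as [He|He].
    - assert (Hm : (S k) mod d = 0%nat).
      { replace (S k) with ((k / d + 1) * d)%nat by nia. apply Nat.Div0.mod_mul. }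
      rewrite Hm. replace (S (i + k mod d)) with j by (unfold d in *; lia).
      rewrite <- Heq. f_equal. f_equal. lia.
    - assert (Hm : S (k mod d) = (S k) mod d).
      { apply (Nat.mod_unique (S k) d (k / d)); lia. }
      rewrite <- Hm. f_equal. f_equal. lia. }
  assert (Hf0 : forall n, src E (f (n * d)%nat) = src E (x i)).
  { intro n. unfold f. rewrite Nat.Div0.mod_mul. rewrite Nat.add_0_r. auto. }
  destruct (bound_list (fun p : fpath E => length (snd p)) L) as [M HM].
  destruct (S M * d)%nat as [|m] eqn:Em; [nia|].
  destruct (cyc_path E f m Hf) as [Hv Hr].
  assert (Hin := HL _ Hv).
  assert (Hr' : frng E (src E (f 0%nat), map f (seq 0 (S m))) = src E (x i))
    by (rewrite Hr, <- Em; apply Hf0).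
  specialize (HM _ (Hin Hr')).
  simpl in HM. rewrite length_map, length_seq in HM. nia.
Qed.

Theorem lemma7p2 (E : graph) (x : nat -> Edge E) (beta : R) :
  countable_graph E ->
  ipath E x ->
  beta < 0 ->
  beta_summable E x beta ->
  (forall i : nat, finite_paths_into E (src E (x i))) /\
  (forall i j : nat, i <> j -> src E (x i) <> src E (x j)) /\
  (exists mu : fpath E,
     valid_fpath E mu /\ is_source E (fsrc E mu) /\ frng E mu = src E (x 0%nat)).
Proof.
  intros _ Hx Hb Hs.
  assert (Hfin : forall i, finite_paths_into E (src E (x i))) by (intro; eapply finite_i; eauto).
  split; [exact Hfin|]. split.
  { intros i j Hij. destruct (Nat.lt_total i j) as [H|[H|H]]; [| lia |].
    - apply distinct_lt; auto.
    - intro He. symmetry in He. revert He. apply distinct_lt; auto. }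
  set (v := src E (x 0%nat)).
  destruct (Hfin 0%nat) as [L HL].
  destruct (bound_list (fun p : fpath E => length (snd p)) L) as [M HM].
  destruct (classic (exists p, valid_fpath E p /\ frng E p = v /\ forall q, valid_fpath E q ->
     frng E q = v -> (length (snd q) <= length (snd p))%nat)) as [[p [Hp1 [Hp2 Hp3]]]|Hn].
  - exists p. split; auto. split; auto.
    intros e He. destruct p as [w l].
    assert (Hv : valid_fpath E (src E e, e :: l)).
    { unfold valid_fpath in *; simpl in *. split; auto. destruct l as [|h l]; auto.
      destruct Hp1 as [Hp1 Hc]. split; auto. unfold fsrc in He; simpl in He. congruence. }
    assert (Hr : frng E (src E e, e :: l) = v).
    { rewrite <- Hp2. unfold frng; cbn [snd fst]. destruct l as [|h l].
      - unfold fsrc in He; simpl in He; auto.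
      - rewrite last_cons'. auto. }
    specialize (Hp3 _ Hv Hr). simpl in Hp3. lia.
  - assert (Hlong : forall k, exists p, valid_fpath E p /\ frng E p = v /\ (k <= length (snd p))%nat).
    { induction k as [|k [p [Hp1 [Hp2 Hp3]]]].
      - exists (v, []). repeat split; simpl; auto; lia.
      - apply NNPP; intro Hc. apply Hn. exists p. repeat split; auto.
        intros q Hq1 Hq2. apply NNPP; intro Hq3. apply Hc. exists q. repeat split; auto. lia. }
    destruct (Hlong (S M)) as [p [Hp1 [Hp2 Hp3]]].
    specialize (HM p (HL p Hp1 Hp2)). simpl in HM. lia.
Qed.
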